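(* Let $R=(r_{ij})$ be a real symmetric $n\times n$ matrix with zero diagonal and $\rho(|R|)<1$, and let $R'$ be the backtrackless adjacency matrix (defined in the context). Then $\rho(|R'|)\le\rho(|R|)$.
   Context: $|M|$ denotes the entrywise absolute value of a matrix $M$, and $\rho$ the spectral radius. $G$ is the graph on $V=\{1,\dots,n\}$ with undirected edge $\{i,j\}$ whenever $r_{ij}\neq0$; $\partial i$ is the neighbour set of $i$; each undirected edge gives directed edges $(ij)$ and $(ji)$. GaBP messages: for each directed edge $(ij)$, $\alpha_{ij}=\lim_t\alpha^{(t)}_{ij}$ with $\alpha^{(0)}_{ij}=0$, $\alpha^{(t+1)}_{ij}=r_{ij}^2(1-\sum_{k\in\partial i\setminus j}\alpha^{(t)}_{ki})^{-1}$ (convergent when $\rho(|R|)<1$, with $1-\alpha_{i\setminus j}>0$); $\alpha_{i\setminus j}=\sum_{k\in\partial i\setminus j}\alpha_{ki}$; $r'_{ij}=\frac{r_{ij}}{1-\alpha_{i\setminus j}}$. The backtrackless adjacency matrix $R'$ has rows and columns indexed by the directed edges of $G$ (so it is $2|E|\times2|E|$, $|E|$ the number of edges), with $R'_{(ij),(kl)}=r'_{kl}$ if $j=k$ and $i\neq l$, and $R'_{(ij),(kl)}=0$ otherwise. *)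

(* Defs.v *)
From HB Require Import structures.
From mathcomp Require Import all_boot all_order all_algebra.
From mathcomp Require Import all_classical all_reals all_analysis.
From mathcomp Require Import complex.
Set Implicit Arguments. Unset Strict Implicit. Unset Printing Implicit Defensive.
Import Order.TTheory GRing.Theory Num.Theory numFieldNormedType.Exports.
Local Open Scope ring_scope.
Local Open Scope classical_set_scope.

Definition absmx (R : realType) m n (M : 'M[R]_(m, n)) : 'M[R]_(m, n) :=
  map_mx (fun x => `|x|) M.

(* spectral radius: the largest modulus of a (complex) eigenvalue, i.e. of a
   root in R[i] of the characteristic polynomial (sup of the empty set is 0 for n = 0) *)
Definition spectral_radius (R : realType) n (A : 'M[R]_n) : R :=
  sup [set Normc.normc l | l in [set l : R[i] |
        root (char_poly (map_mx (fun x : R => (x%:C)%C) A)) l]].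

(* GaBP message iterates alpha^(t)_{ij} (defined for all pairs; nonzero only on
   directed edges).  Neighbour k of i: r_{ik} != 0. *)
Fixpoint gabp_iter (R : realType) n (M : 'M[R]_n) (t : nat) : 'I_n -> 'I_n -> R :=
  match t with
  | 0 => fun _ _ => 0
  | t'.+1 => fun i j =>
      M i j ^+ 2 *
      (1 - \sum_(k < n | (M i k != 0) && (k != j)) gabp_iter M t' k i)^-1
  end.

Definition gabp_alpha (R : realType) n (M : 'M[R]_n) (i j : 'I_n) : R :=
  limn (fun t => gabp_iter M t i j).

Definition gabp_alpha_excl (R : realType) n (M : 'M[R]_n) (i j : 'I_n) : R :=
  \sum_(k < n | (M i k != 0) && (k != j)) gabp_alpha M k i.

Definition rprime (R : realType) n (M : 'M[R]_n) (i j : 'I_n) : R :=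
  M i j / (1 - gabp_alpha_excl M i j).

Definition dedge (R : realType) n (M : 'M[R]_n) :=
  {e : 'I_n * 'I_n | M e.1 e.2 != 0}.

Definition backtrackless (R : realType) n (M : 'M[R]_n) :
  'M[R]_#|{: dedge M}| :=
  \matrix_(a, b)
    let: (i, j) := val (enum_val a : dedge M) in
    let: (k, l) := val (enum_val b : dedge M) in
    if (j == k) && (i != l) then rprime M k l else 0.

(* Main.v *)
Require Import Defs.
From HB Require Import structures.
From mathcomp Require Import all_boot all_order all_algebra.
From mathcomp Require Import all_classical all_reals all_analysis.
From mathcomp Require Import complex.
From mathcomp Require Import polyrcf.
From mathcomp Require Import ring lra.
Import Order.TTheory GRing.Theory Num.Theory numFieldNormedType.Exports.
Local Open Scope ring_scope.
Set Implicit Arguments. Unset Strict Implicit. Unset Printing Implicit Defensive.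
Lemma char_poly_tr (F : fieldType) m (A : 'M[F]_m) : char_poly A^T = char_poly A.
Proof.
rewrite /char_poly -det_tr; congr (\det _).
by apply/matrixP => i j; rewrite !mxE; case: eqP => [->|]; case: eqP => // ->.
Qed.

Lemma normC_real (R : realType) (x : R) : 0 <= x -> `|(x%:C)%C| = (x%:C)%C.
Proof. by move=> x0; apply: ger0_norm; rewrite ler0c. Qed.

Lemma root_norm_le (R : realType) m (C : 'M[R]_m) (v : 'I_m -> R) (lam : R) :
  (forall a b, 0 <= C a b) -> (forall a, 0 < v a) ->
  (forall b, \sum_a v a * C a b <= lam * v b) ->
  forall l, root (char_poly (map_mx (fun x : R => (x%:C)%C) C)) l -> Normc.normc l <= lam.
Proof.
move=> C0 v0 Hv l Hl.
have /eigenvalueP [u Hu u0] : eigenvalue (map_mx (fun x : R => (x%:C)%C) C)^T l by rewrite eigenvalue_root_char char_poly_tr.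
have Hb b : `|l| * `|u 0 b| <= \sum_a `|u 0 a| * ((C b a)%:C)%C.
  move/matrixP: Hu => /(_ 0 b); rewrite !mxE => Hub; rewrite -normrM -Hub.
  apply: le_trans (ler_norm_sum _ _ _) _; apply: ler_sum => a _.
  by rewrite !mxE normrM normC_real.
set K := \sum_b ((v b)%:C)%C * `|u 0 b|.
have Kpos : 0 < K.
  have [a ua] : exists a, u 0 a != 0.
    apply/existsP; apply: contraNT u0 => /existsPn H.
    by apply/eqP/rowP => a; rewrite mxE; apply/eqP; have := H a; rewrite negbK.
  rewrite /K (bigD1 a) //=; apply: ltr_pwDl.
    by rewrite mulr_gt0 ?normr_gt0 // ltcR v0.
  by apply: sumr_ge0 => b _; rewrite mulr_ge0 // ler0c ltW.
have : `|l| * K <= (lam%:C)%C * K.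
  rewrite /K !mulr_sumr; apply: (@le_trans _ _ (\sum_b ((v b)%:C)%C * \sum_a `|u 0 a| * ((C b a)%:C)%C)).
    apply: ler_sum => b _; rewrite mulrCA; apply: ler_wpM2l; first by rewrite ler0c ltW.
    exact: Hb.
  under eq_bigr do rewrite mulr_sumr.
  rewrite exchange_big /=; apply: ler_sum => a _.
  under eq_bigr do rewrite mulrCA.
  rewrite -mulr_sumr [X in _ <= X]mulrA [X in _ <= X]mulrC; apply: ler_wpM2l => //.
  under eq_bigr do rewrite -rmorphM /=.
  rewrite -(rmorph_sum (real_complex R)) -rmorphM lecR.
  by apply: le_trans (Hv a); rewrite le_eqVlt; apply/orP; left; apply/eqP; apply: eq_bigr => b _; rewrite mulrC.
rewrite ler_pM2r // => H.
by rewrite -lecR.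
Qed.


Lemma sr_le (R : realType) m (C : 'M[R]_m) (v : 'I_m -> R) (lam : R) :
  (forall a b, 0 <= C a b) -> (forall a, 0 < v a) -> 0 <= lam ->
  (forall b, \sum_a v a * C a b <= lam * v b) -> spectral_radius C <= lam.
Proof.
move=> C0 v0 lam0 Hv; rewrite /spectral_radius.
set S := (X in sup X).
have [Sne|Se] := pselect (S !=set0)%classic; last first.
  rewrite (_ : S = set0%classic) ?sup0 //.
  by apply/seteqP; split => // x Sx; apply: Se; exists x.
apply: ge_sup => //= _ [l Hl <-].
exact: (root_norm_le C0 v0 Hv Hl).
Qed.

Lemma sr_ge_root (R : realType) m (C : 'M[R]_m) :
  (forall a b, 0 <= C a b) ->
  forall l, root (char_poly (map_mx (fun x : R => (x%:C)%C) C)) l ->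
  Normc.normc l <= spectral_radius C.
Proof.
move=> C0 l Hl; rewrite /spectral_radius.
apply: ub_le_sup; last by exists l.
exists (\sum_a \sum_b C a b) => _ [l' Hl' <-].
apply: (@root_norm_le R m C (fun _ => 1)) => // b.
rewrite mulr1; apply: ler_sum => a _; rewrite mul1r (bigD1 b) //= lerDl.
by apply: sumr_ge0.
Qed.

Lemma normc_real (R : realType) (t : R) : Normc.normc ((t%:C)%C) = `|t|.
Proof. by rewrite /Normc.normc /= expr0n /= addr0 sqrtr_sqr. Qed.

Lemma cpmx_eval (R : realType) n (A : 'M[R]_n) (W : 'cV[{poly R}]_n) t i :
  ((char_poly_mx A *m W) i 0).[t] = t * (W i 0).[t] - \sum_j A i j * (W j 0).[t].
Proof.
rewrite mxE horner_sum.
under eq_bigr do rewrite /char_poly_mx !mxE hornerM hornerD hornerN hornerMn hornerX hornerC mulrBl.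
rewrite sumrB (bigD1 i) //= eqxx mulr1n big1 ?addr0 //.
by move=> j /negPf; rewrite eq_sym => ->; rewrite mulr0n mul0r.
Qed.

Lemma perron_sub (R : realType) n (A : 'M[R]_n) (t0 : R) :
  (forall i j, 0 <= A i j) -> spectral_radius A < t0 ->
  exists x : 'I_n -> R, (forall i, 0 < x i) /\ (forall i, \sum_j A i j * x j <= t0 * x i).
Proof.
move=> A0 Ht0.
set p := char_poly A.
have noroot t : t0 <= t -> p.[t] != 0.
  move=> tt0; apply/negP => /eqP Hr.
  have Hc : root (char_poly (map_mx (fun x : R => (x%:C)%C) A)) (t%:C)%C.
    by rewrite -map_char_poly; apply: rmorph_root; apply/rootP.
  have := sr_ge_root A0 Hc; rewrite normc_real => H.
  have := le_trans (ler_norm t) H; rewrite leNgt => /negP; apply.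
  exact: lt_le_trans Ht0 tt0.
have lcp : lead_coef p = 1 by apply/eqP; exact: char_poly_monic.
have dpos t : t0 <= t -> 0 < p.[t].
  move=> tt0; have lc0 : 0 < lead_coef p by rewrite lcp ltr01.
  have [N HN] := poly_pinfty_gt_lc lc0.
  have pT : 0 < p.[Num.max N t] by apply: lt_le_trans (HN _ _); rewrite ?lcp ?ltr01 ?le_max ?lexx.
  rewrite lt_neqAle eq_sym noroot //=; rewrite leNgt; apply/negP => pt.
  have [x /andP [x1 x2] rx] := @poly_ivtoo R p t (Num.max N t) (ltac:(by rewrite le_max lexx orbT)) (ltac:(by rewrite pmulr_llt0)).
  by move: (noroot x (le_trans tt0 (ltW x1))); rewrite -rootE rx.
pose W := \adj (char_poly_mx A) *m const_mx 1 : 'cV[{poly R}]_n.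
pose w t i := (W i 0).[t].
have weq t i : t * w t i - \sum_j A i j * w t j = p.[t].
  have : ((char_poly_mx A *m W) i 0).[t] = (((p%:M) *m const_mx 1 : 'cV[{poly R}]_n) i 0).[t].
    by rewrite /W mulmxA mul_mx_adj.
  by rewrite cpmx_eval => ->; rewrite mul_scalar_mx !mxE mulr1.
have posnn t : t0 <= t -> (forall j, 0 <= w t j) -> forall j, 0 < w t j.
  move=> tt0 H j; rewrite lt_neqAle H andbT; apply/eqP => wj0.
  have := weq t j; rewrite -wj0 mulr0 sub0r => Hs.
  have := dpos t tt0; rewrite -Hs oppr_gt0 ltNge => /negP; apply.
  by apply: sumr_ge0 => k _; apply: mulr_ge0.
set s := \sum_i \sum_j A i j.
set T := Num.max t0 (1 + s) + 1.
have t0T : t0 < T.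
  have h : t0 <= Num.max t0 (1 + s) by rewrite le_max lexx.
  rewrite /T; lra.
have sT i : \sum_j A i j < T.
  have h1 : \sum_j A i j <= s by rewrite /s [X in _ <= X](bigD1 i) //= lerDl; apply: sumr_ge0 => k _; apply: sumr_ge0.
  have h2 : 1 + s <= Num.max t0 (1 + s) by rewrite le_max lexx orbT.
  rewrite /T; lra.
have wT i : 0 < w T i.
  case: (arg_minP (fun j => w T j) (isT : predT i)) => j0 _ Hj0.
  suff : 0 < w T j0 by move/lt_le_trans; apply; exact: Hj0.
  rewrite ltNge; apply/negP => hj0.
  have h1 : (\sum_j A j0 j) * w T j0 <= \sum_j A j0 j * w T j.
    by rewrite mulr_suml; apply: ler_sum => j _; apply: ler_wpM2l => //; exact: Hj0.
  have := weq T j0; have := dpos T (ltW t0T); have := sT j0.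
  move: h1 hj0; set S1 := \sum_j A j0 j; set S2 := \sum_j A j0 j * w T j; set a := w T j0.
  move=> h1 hj0 h2 h3 h4. nra.
set P := \prod_i W i 0.
have PT : 0 < P.[T] by rewrite horner_prod; apply: prodr_gt0 => i _; exact: wT.
have key y : t0 <= y -> y < T -> {in `]y, T[, forall z, ~~ root P z} -> forall j, 0 < w y j.
  move=> ty yT nr; apply: posnn => // j; rewrite leNgt; apply/negP => wj.
  have [x xin rx] := @poly_ivtoo R (W j 0) y T (ltW yT) (ltac:(by rewrite pmulr_llt0 ?wT)).
  by have := nr x xin; rewrite rootE horner_prod (bigD1 j) //= (rootP rx) mul0r eqxx.
case: (prev_rootP P t0 T) => [P0 | y _ Py yin nr | c _ hc nr].
- by rewrite P0 horner0 ltxx in PT.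
- move: yin; rewrite in_itv /= => /andP[h1 h2].
  have Hp := key y (ltW h1) h2 nr.
  have : 0 < P.[y] by rewrite horner_prod; apply: prodr_gt0 => i _; exact: Hp i.
  by rewrite Py ltxx.
- exists (w t0); split; first exact: key t0 (lexx _) t0T nr.
  move=> i; have := weq t0 i; have := dpos t0 (lexx _); lra.
Qed.

Definition Sx (R : realType) n (M : 'M[R]_n) (b : 'I_n -> 'I_n -> R) (i j : 'I_n) :=
  \sum_(k < n | (M i k != 0) && (k != j)) b k i.

Lemma excl_bound (R : realType) n (M : 'M[R]_n) (x : 'I_n -> R) (lam : R)
  (b : 'I_n -> 'I_n -> R) :
  (forall i j, M i j = M j i) -> (forall i, 0 < x i) ->
  (forall i, \sum_j `|M i j| * x j <= lam * x i) ->
  (forall i j, 0 <= b i j) -> (forall i j, b i j * x j <= `|M i j| * x i) ->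
  forall i j, (1 - lam) * x i + `|M i j| * x j <= (1 - Sx M b i j) * x i.
Proof.
move=> HM x0 Hx b0 Hb i j.
have h1 : Sx M b i j * x i <= \sum_(k | k != j) `|M i k| * x k.
  rewrite /Sx mulr_suml big_mkcond [X in _ <= X]big_mkcond /=.
  apply: ler_sum => k _; case: (k != j); rewrite ?andbT ?andbF //=.
  case: (M i k != 0) => /=; last by apply: mulr_ge0 => //; apply: ltW.
  by rewrite HM; exact: Hb.
have h2 : \sum_k `|M i k| * x k = `|M i j| * x j + \sum_(k | k != j) `|M i k| * x k.
  by rewrite (bigD1 j).
have := Hx i; lra.
Qed.

Lemma gabp_bounds (R : realType) n (M : 'M[R]_n) (x : 'I_n -> R) (lam : R) :
  (forall i j, M i j = M j i) -> (forall i, 0 < x i) -> lam < 1 ->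
  (forall i, \sum_j `|M i j| * x j <= lam * x i) ->
  forall t, (forall i j, 0 <= gabp_iter M t i j /\ gabp_iter M t i j * x j <= `|M i j| * x i).
Proof.
move=> HM x0 lam1 Hx; elim => [|t IH] i j /=.
  by rewrite lexx mul0r mulr_ge0 // ltW.
have := excl_bound HM x0 Hx (fun i j => proj1 (IH i j)) (fun i j => proj2 (IH i j)) i j.
rewrite -/(Sx M (gabp_iter M t) i j); set D := 1 - Sx _ _ i j => HD.
have xi := x0 i; have xj := x0 j.
have h1 : 0 < (1 - lam) * x i by rewrite mulr_gt0 // subr_gt0.
have h2 : 0 <= `|M i j| * x j by rewrite mulr_ge0 // ltW.
have Dpos : 0 < D.
  have : 0 < D * x i by lra.
  by rewrite pmulr_lgt0.
split; first by rewrite mulr_ge0 ?sqr_ge0 // invr_ge0 ltW.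
rewrite mulrAC ler_pdivrMr // -real_normK ?num_real // expr2 -!mulrA ler_wpM2l //.
have : `|M i j| * x j <= D * x i by lra.
by rewrite [x i * D]mulrC.
Qed.

Lemma gabp_Dpos (R : realType) n (M : 'M[R]_n) (x : 'I_n -> R) (lam : R) :
  (forall i j, M i j = M j i) -> (forall i, 0 < x i) -> lam < 1 ->
  (forall i, \sum_j `|M i j| * x j <= lam * x i) ->
  forall (b : 'I_n -> 'I_n -> R), (forall i j, 0 <= b i j) -> (forall i j, b i j * x j <= `|M i j| * x i) ->
  forall i j, 0 < 1 - Sx M b i j.
Proof.
move=> HM x0 lam1 Hx b b0 Hb i j.
have HD := excl_bound HM x0 Hx b0 Hb i j.
have xi := x0 i; have xj := x0 j.
have h1 : 0 < (1 - lam) * x i by rewrite mulr_gt0 // subr_gt0.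
have h2 : 0 <= `|M i j| * x j by rewrite mulr_ge0 // ltW.
have : 0 < (1 - Sx M b i j) * x i by lra.
by rewrite pmulr_lgt0.
Qed.

Lemma gabp_mono (R : realType) n (M : 'M[R]_n) (x : 'I_n -> R) (lam : R) :
  (forall i j, M i j = M j i) -> (forall i, 0 < x i) -> lam < 1 ->
  (forall i, \sum_j `|M i j| * x j <= lam * x i) ->
  forall t i j, gabp_iter M t i j <= gabp_iter M t.+1 i j.
Proof.
move=> HM x0 lam1 Hx; have B := gabp_bounds HM x0 lam1 Hx.
have DP t := gabp_Dpos HM x0 lam1 Hx (fun i j => proj1 (B t i j)) (fun i j => proj2 (B t i j)).
elim => [|t IH] i j; first exact: (proj1 (B 1%N i j)).
change (M i j ^+ 2 * (1 - Sx M (gabp_iter M t) i j)^-1 <= M i j ^+ 2 * (1 - Sx M (gabp_iter M t.+1) i j)^-1).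
apply: ler_wpM2l; first exact: sqr_ge0.
rewrite lef_pV2 ?posrE ?DP // lerD2l lerN2.
by apply: ler_sum => k _; exact: IH.
Qed.

Lemma gabp_lim (R : realType) n (M : 'M[R]_n) (x : 'I_n -> R) (lam : R) :
  (forall i j, M i j = M j i) -> (forall i, 0 < x i) -> lam < 1 ->
  (forall i, \sum_j `|M i j| * x j <= lam * x i) ->
  forall i j, [/\ 0 <= gabp_alpha M i j, gabp_alpha M i j * x j <= `|M i j| * x i &
    gabp_alpha M i j * (1 - Sx M (gabp_alpha M) i j) = M i j ^+ 2].
Proof.
move=> HM x0 lam1 Hx; have B := gabp_bounds HM x0 lam1 Hx.
have DP t := gabp_Dpos HM x0 lam1 Hx (fun i j => proj1 (B t i j)) (fun i j => proj2 (B t i j)).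
have Mo := gabp_mono HM x0 lam1 Hx.
have nd i j : nondecreasing_seq (fun t => gabp_iter M t i j) by apply/nondecreasing_seqP => t; exact: Mo.
have cv i j : cvgn (fun t => gabp_iter M t i j).
  apply: nondecreasing_is_cvgn; first exact: nd.
  exists (`|M i j| * x i / x j) => _ [t _ <-].
  by rewrite ler_pdivlMr //; exact: (proj2 (B t i j)).
have ge i j t : gabp_iter M t i j <= gabp_alpha M i j by exact: nondecreasing_cvgn_le (nd i j) (cv i j) t.
have al0 i j : 0 <= gabp_alpha M i j by apply: le_trans (ge i j 0%N); rewrite lexx.
have alb i j : gabp_alpha M i j * x j <= `|M i j| * x i.
  rewrite -ler_pdivlMr //; apply: limr_le; first exact: cv.
  by apply: nearW => t; rewrite ler_pdivlMr //; exact: (proj2 (B t i j)).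
move=> i j; split => //.
have E t : gabp_iter M t.+1 i j * (1 - Sx M (gabp_iter M t) i j) = M i j ^+ 2.
  by rewrite /= -mulrA mulVf ?mulr1 // gt_eqF // DP.
have C1 : ((fun t => gabp_iter M t.+1 i j) @ \oo --> gabp_alpha M i j)%classic.
  by rewrite (cvg_shiftS (fun t => gabp_iter M t i j)); exact: cv.
have C2 : ((fun t => Sx M (gabp_iter M t) i j) @ \oo --> Sx M (gabp_alpha M) i j)%classic.
  by apply: cvg_big => //; exact: add_continuous.
have C3 : ((fun t => gabp_iter M t.+1 i j * (1 - Sx M (gabp_iter M t) i j)) @ \oo -->
    gabp_alpha M i j * (1 - Sx M (gabp_alpha M) i j))%classic.
  by apply: cvgM => //; apply: cvgB => //; exact: cvg_cst.
have Ef : (fun t => gabp_iter M t.+1 i j * (1 - Sx M (gabp_iter M t) i j)) = (fun _ => M i j ^+ 2).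
  by apply: funext => t; exact: E t.
rewrite Ef in C3; have H := cvg_lim (@Rhausdorff R) C3.
by rewrite -H lim_cst.
Qed.

Lemma sum_dedge (R : realType) n (M : 'M[R]_n) (g : 'I_n * 'I_n -> R) :
  (forall p, M p.1 p.2 = 0 -> g p = 0) ->
  \sum_(a < #|{: dedge M}|) g (val (enum_val a)) = \sum_i \sum_j g (i, j).
Proof.
move=> g0.
have -> : \sum_i \sum_j g (i, j) = \sum_p g p.
  by rewrite pair_bigA; apply: eq_bigr => -[i j].
rewrite -(big_enum_val (A := {: dedge M}) (fun e => g (val e))) /=.
rewrite [RHS](bigID (fun p => M p.1 p.2 != 0)) /= [X in _ = _ + X]big1 ?addr0; last first.
  by move=> p /negPn/eqP; apply: g0.
rewrite (reindex_omap (val : dedge M -> 'I_n * 'I_n) insub); last first.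
  by move=> p Hp; rewrite insubT.
apply: eq_bigl => -[p Hp] /=; rewrite insubT /=.
by rewrite Hp eqxx.
Qed.

Lemma main_bound (R : realType) n (M : 'M[R]_n) (x : 'I_n -> R) (lam : R) :
  (forall i j, M i j = M j i) -> (forall i, 0 < x i) -> 0 <= lam -> lam < 1 ->
  (forall i, \sum_j `|M i j| * x j <= lam * x i) ->
  spectral_radius (absmx (backtrackless M)) <= lam.
Proof.
move=> HM x0 lam0 lam1 Hx.
have L := gabp_lim HM x0 lam1 Hx.
have al0 i j : 0 <= gabp_alpha M i j by case: (L i j).
have alb i j : gabp_alpha M i j * x j <= `|M i j| * x i by case: (L i j).
have alfp i j : gabp_alpha M i j * (1 - Sx M (gabp_alpha M) i j) = M i j ^+ 2 by case: (L i j).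
pose D i j := 1 - Sx M (gabp_alpha M) i j.
have Dpos i j : 0 < D i j := gabp_Dpos HM x0 lam1 Hx al0 alb i j.
have Db i j : (1 - lam) * x i + `|M i j| * x j <= D i j * x i := excl_bound HM x0 Hx al0 alb i j.
have Dle1 i j : D i j <= 1.
  by rewrite /D lerBlDr lerDl /Sx; apply: sumr_ge0 => k _; exact: al0.
have alD i j : gabp_alpha M i j = `|M i j| ^+ 2 / D i j.
  by rewrite real_normK ?num_real // -(alfp i j) mulfK // (gt_eqF (Dpos i j)).
have rpE k l : `|rprime M k l| = `|M k l| / D k l.
  change (`|M k l / D k l| = `|M k l| / D k l).
  by rewrite normrM normrV ?unitfE ?(gt_eqF (Dpos k l)) // (ger0_norm (ltW (Dpos k l))).
pose vf i j := `|M i j| * (x i - `|M i j| * x j / D i j).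
have vf0 i j : M i j = 0 -> vf i j = 0 by move=> H; rewrite /vf H normr0 mul0r.
have vfpos i j : M i j != 0 -> 0 < vf i j.
  move=> Mij; rewrite /vf mulr_gt0 ?normr_gt0 // subr_gt0 ltr_pdivrMr //.
  have := Db i j; have := x0 i; have := x0 j; have := Dpos i j.
  have : 0 < (1 - lam) * x i by rewrite mulr_gt0 // subr_gt0.
  lra.
apply: (@sr_le _ _ _ (fun a => vf (val (enum_val a)).1 (val (enum_val a)).2)) => //.
- by move=> a b; rewrite mxE normr_ge0.
- by move=> a; apply: vfpos; exact: (valP (enum_val a)).
move=> b; case E: (val (enum_val b)) => [k l] /=.
have Mkl : M k l != 0 by have := valP (enum_val b); rewrite E.
pose c := `|M k l| / D k l.
pose g (p : 'I_n * 'I_n) := vf p.1 p.2 * (if (p.2 == k) && (p.1 != l) then c else 0).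
have -> : \sum_(a < #|{: dedge M}|) vf (val (enum_val a : dedge M)).1 (val (enum_val a : dedge M)).2 * absmx (backtrackless M) a b =
    \sum_(a < #|{: dedge M}|) g (val (enum_val a : dedge M)).
  apply: eq_bigr => a _; rewrite /absmx /backtrackless !mxE E /=.
  case: (val (enum_val a)) => i j /=; rewrite /g /=.
  by case: ifP => _; rewrite ?normr0 ?rpE.
rewrite sum_dedge; last by move=> p /vf0 H; rewrite /g H mul0r.
have -> : \sum_i \sum_j g (i, j) = c * \sum_(i | i != l) vf i k.
  rewrite mulr_sumr [RHS]big_mkcond /=; apply: eq_bigr => i _.
  rewrite (bigD1 k) //= big1 ?addr0; last by move=> j /negPf H; rewrite /g /= H /= mulr0.
  by rewrite /g /= eqxx /=; case: (i != l); rewrite ?mulr0 // mulrC.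
have S1 : \sum_(i | i != l) `|M i k| * x i <= lam * x k - `|M k l| * x l.
  have -> : \sum_(i | i != l) `|M i k| * x i = \sum_(i | i != l) `|M k i| * x i.
    by apply: eq_bigr => i _; rewrite HM.
  have := Hx k; rewrite (bigD1 l) //=; lra.
have S2 : \sum_(i | i != l) `|M i k| ^+ 2 / D i k = 1 - D k l.
  rewrite /D /Sx opprB addrC subrK big_mkcond [RHS]big_mkcond; apply: eq_bigr => i _.
  case: (i != l); rewrite ?andbT ?andbF //=.
  case: eqP => [Hki|_] /=; last by rewrite alD.
  by rewrite HM Hki normr0 expr0n /= mul0r.
have vfsum : \sum_(i | i != l) vf i k =
    \sum_(i | i != l) `|M i k| * x i - x k * \sum_(i | i != l) `|M i k| ^+ 2 / D i k.
  by rewrite mulr_sumr -sumrB; apply: eq_bigr => i _; rewrite /vf; ring.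
rewrite vfsum S2 /c /vf.
move: S1 (Dpos k l) (Dle1 k l) (x0 k) (x0 l) (normr_ge0 (M k l)).
set r := `|M k l|; set Dk := D k l; set X := x k; set Y := x l; set S := \sum_(i | i != l) _.
move=> S1 Dk0 Dk1 X0 Y0 r0.
set u := r / Dk.
have ru : r = u * Dk by rewrite /u divfK // gt_eqF.
have u0 : 0 <= u by rewrite /u divr_ge0 // ltW.
have rY : r * Y / Dk = u * Y by rewrite /u mulrAC.
rewrite rY; rewrite ru in S1; rewrite ru.
apply: le_trans (_ : u * (lam * X - u * Dk * Y - X * (1 - Dk)) <= _).
  by apply: ler_wpM2l => //; lra.
rewrite -subr_ge0.
have -> : lam * (u * Dk * (X - u * Y)) - u * (lam * X - u * Dk * Y - X * (1 - Dk)) =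
    (1 - lam) * (u * X * (1 - Dk) + u * u * Dk * Y) by ring.
apply: mulr_ge0; first lra.
have h1 : 0 <= u * X by apply: mulr_ge0 => //; apply: ltW.
have h2 : 0 <= u * u * Dk by apply: mulr_ge0; [apply: mulr_ge0 | apply: ltW].
apply: addr_ge0; apply: mulr_ge0 => //; [lra | apply: ltW => //].
Qed.

Lemma sr_ge0 (R : realType) m (C : 'M[R]_m) : (forall a b, 0 <= C a b) -> 0 <= spectral_radius C.
Proof.
move=> C0; rewrite /spectral_radius.
set S := (X in sup X).
have [[y [l Hl _]]|Se] := pselect (S !=set0)%classic; last first.
  rewrite (_ : S = set0%classic) ?sup0 //.
  by apply/seteqP; split => // x Sx; apply: Se; exists x.
apply: le_trans (sr_ge_root C0 Hl).
by rewrite /Normc.normc; case: l {Hl} => a b; apply: sqrtr_ge0.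
Qed.

Unset Implicit Arguments.

Theorem lemma5 (R : realType) (n : nat) (M : 'M[R]_n) :
  M^T = M ->
  (forall i, M i i = 0) ->
  spectral_radius (absmx M) < 1 ->
  spectral_radius (absmx (backtrackless M)) <= spectral_radius (absmx M).
Proof.
move=> HT _ H1.
have HM i j : M i j = M j i by rewrite -{1}HT mxE.
have A0 : forall i j, 0 <= absmx M i j by move=> i j; rewrite mxE normr_ge0.
have B0 : forall i j, 0 <= absmx (backtrackless M) i j by move=> i j; rewrite mxE normr_ge0.
have r0 := sr_ge0 A0.
set rho := spectral_radius (absmx M) in r0 H1 *.
set sB := spectral_radius (absmx (backtrackless M)).
rewrite leNgt; apply/negP => Hlt.
set mm := Num.min sB 1.
have m1 : mm <= 1 by rewrite /mm ge_min lexx orbT.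
have m2 : mm <= sB by rewrite /mm ge_min lexx.
have m3 : rho < mm by rewrite /mm lt_min Hlt H1.
set lam := (rho + mm) / 2.
have l1 : rho < lam by rewrite /lam; lra.
have l2 : lam < 1 by rewrite /lam; lra.
have l3 : lam < sB by rewrite /lam; lra.
have l0 : 0 <= lam by rewrite /lam; lra.
have [x [xpos Hx]] := perron_sub A0 l1.
have Hx' i : \sum_j `|M i j| * x j <= lam * x i.
  by apply: le_trans (Hx i); rewrite le_eqVlt; apply/orP; left; apply/eqP; apply: eq_bigr => j _; rewrite mxE.
have := main_bound HM xpos l0 l2 Hx'.
by rewrite -/sB leNgt l3.
Qed.
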